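(* Let $\theta=q/r$ with $q,r$ coprime positive integers and let $(U,V)$ be an irreducible finite-dimensional unitary representation of $\mathcal A_\theta$ on $\mathcal H$. Then every irreducible finite-dimensional representation of $\mathcal A_\theta$ is unitarily equivalent to $(sU,tV)$ for some $s,t\in S^1$ (so the irreducible representations are indexed by points of a 2-torus), and all the bundles $\mathcal E_\pi$ associated with irreducible finite-dimensional representations $\pi$ of $\mathcal A_\theta$ are isomorphic as topological complex vector bundles over $\mathbb C/\Lambda$.
   Context: Let $\tau\in\mathbb C$ with $\mathrm{Im}\,\tau>0$, $\Lambda=\mathbb Z+\tau\mathbb Z$, $\theta>0$, $\alpha:=\pi\theta/\mathrm{Im}\,\tau$. $\mathcal A_\theta$ is the noncommutative torus generated by unitaries $u,v$ with $vu=e^{2\pi i\theta}uv$. For a representation $\pi$ of $\mathcal A_\theta$ on a finite-dimensional Hilbert space $\mathcal H_\pi$ and $\gamma=n+\tau m\in\Lambda$, set $J^\pi_\gamma(z)=\exp(\alpha(z\bar\gamma+\frac12|\gamma|^2))e^{\pi i\theta nm}\pi(u)^{-n}\pi(v)^{-m}$; $\mathcal E_\pi\to\mathbb C/\Lambda$ is the holomorphic vector bundle whose smooth (resp. holomorphic) sections are smooth (resp. holomorphic) maps $s:\mathbb C\to\mathcal H_\pi$ with $s(z+\gamma)=J^\pi_\gamma(z)s(z)$ for all $\gamma\in\Lambda$. *)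

(* Defs.v *)
From HB Require Import structures.
From mathcomp Require Import all_boot all_order all_algebra.
From mathcomp Require Import all_classical all_reals.
From mathcomp Require Import topology normedtype exp trigo.
From mathcomp Require Import all_analysis.
From mathcomp Require Import complex.
Set Implicit Arguments. Unset Strict Implicit. Unset Printing Implicit Defensive.
Import Order.TTheory GRing.Theory Num.Theory.
Import numFieldNormedType.Exports.
Local Open Scope ring_scope.
Local Open Scope complex_scope.

Section NCTorus.
Variable R : realType.
Local Notation C := R[i].

Definition cexp (z : C) : C :=
  (expR (complex.Re z))%:C * (cos (complex.Im z) +i* sin (complex.Im z)).

Definition adjmx m n (M : 'M[C]_(m, n)) : 'M[C]_(n, m) := (map_mx conjc M)^T.

Definition unitarymx n (M : 'M[C]_n) : Prop :=
  adjmx M *m M = 1%:M /\ M *m adjmx M = 1%:M.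

Definition mxpowz n (M : 'M[C]_n) (k : int) : 'M[C]_n :=
  match k with
  | Posz m => M ^+ m
  | Negz m => (invmx M) ^+ m.+1
  end.

Definition theta_of (q r : nat) : R := q%:R / r%:R.

(* A (unitary, i.e. *-) representation of A_theta on C^n (the Hilbert space
   H_pi, with standard inner product): pi(u) = U, pi(v) = V unitary with
   V U = e^{2 pi i theta} U V. *)
Definition is_rep (theta : R) n (U V : 'M[C]_n) : Prop :=
  [/\ unitarymx U, unitarymx V &
      V *m U = cexp (0 +i* (2 * pi * theta)) *: (U *m V)].

(* Subspaces of column vectors C^n are encoded as row spaces of the
   transposed vectors: x in S <-> x^T in rowspace W; U S <= S <-> W U^T <= W. *)
Definition is_irrep (theta : R) n (U V : 'M[C]_n) : Prop :=
  [/\ is_rep theta U V, (0 < n)%N &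
      forall W : 'M[C]_n,
        (W *m U^T <= W)%MS -> (W *m V^T <= W)%MS ->
        \rank W = 0%N \/ \rank W = n].

Definition unit_equiv m n (U' V' : 'M[C]_m) (U V : 'M[C]_n) : Prop :=
  exists W : 'M[C]_(m, n),
    [/\ adjmx W *m W = 1%:M, W *m adjmx W = 1%:M,
        U' = W *m U *m adjmx W & V' = W *m V *m adjmx W].

Definition alpha (theta : R) (tau : C) : R := pi * theta / complex.Im tau.

Definition Jfac (theta : R) (tau : C) n (U V : 'M[C]_n) (a b : int) (z : C)
  : 'M[C]_n :=
  let gamma : C := a%:~R + tau * b%:~R in
  (cexp ((alpha theta tau)%:C * (z * gamma^* + 2^-1 * (gamma * gamma^*)))
   * cexp (0 +i* (pi * theta * a%:~R * b%:~R)))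
  *: (mxpowz U (- a) *m mxpowz V (- b)).

Definition cont_mxfun m n (F : C -> 'M[C]_(m, n)) : Prop :=
  forall i j,
    continuous (fun p : (R * R)%type => complex.Re (F (p.1 +i* p.2) i j)) /\
    continuous (fun p : (R * R)%type => complex.Im (F (p.1 +i* p.2) i j)).

(* E_pi and E_pi' are isomorphic as topological complex vector bundles over
   C/Lambda: a continuous bundle isomorphism lifts to a continuous map
   Phi : C -> Iso(H_pi, H_pi') (with continuous inverse Psi) intertwining
   the factors of automorphy. *)
Definition bundle_iso (theta : R) (tau : C) m n
  (U V : 'M[C]_n) (U' V' : 'M[C]_m) : Prop :=
  exists (Phi : C -> 'M[C]_(m, n)) (Psi : C -> 'M[C]_(n, m)),
    [/\ cont_mxfun Phi, cont_mxfun Psi,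
        forall z, Psi z *m Phi z = 1%:M,
        forall z, Phi z *m Psi z = 1%:M &
        forall (a b : int) z,
          Phi (z + (a%:~R + tau * b%:~R)) *m Jfac theta tau U V a b z
          = Jfac theta tau U' V' a b z *m Phi z].

End NCTorus.

(* Main.v *)
Require Import Defs.
From HB Require Import structures.
From mathcomp Require Import all_boot all_order all_algebra.
From mathcomp Require Import all_classical all_reals.
From mathcomp Require Import topology normedtype exp trigo.
From mathcomp Require Import all_analysis.
From mathcomp Require Import complex.
From mathcomp Require Import ring lra.
Import Order.TTheory GRing.Theory Num.Theory.
Import numFieldNormedType.Exports.
Local Open Scope ring_scope.
Local Open Scope complex_scope.
Set Implicit Arguments. Unset Strict Implicit. Unset Printing Implicit Defensive.
Section A.
Variable R : realType.
Local Notation C := R[i].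

Lemma adjmxM m n p (A : 'M[C]_(m, n)) (B : 'M[C]_(n, p)) :
  adjmx (A *m B) = adjmx B *m adjmx A.
Proof. by rewrite /adjmx map_mxM trmx_mul. Qed.

Lemma adjmxK m n (A : 'M[C]_(m, n)) : adjmx (adjmx A) = A.
Proof. by apply/matrixP => i j; rewrite !mxE conjcK. Qed.

Lemma adjmxZ m n a (A : 'M[C]_(m, n)) : adjmx (a *: A) = a^* *: adjmx A.
Proof. by apply/matrixP => i j; rewrite !mxE rmorphM. Qed.

Lemma adjmx1 n : adjmx (1%:M : 'M[C]_n) = 1%:M.
Proof. by apply/matrixP => i j; rewrite !mxE eq_sym; case: (i == j) => /=; rewrite ?mulr0n ?mulr1n /= ?oppr0. Qed.

Lemma adjmx_scalar n a : adjmx (a%:M : 'M[C]_n) = a^*%:M.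
Proof. by rewrite -scalemx1 adjmxZ adjmx1 scalemx1. Qed.

Lemma adjmx_tr m n (A : 'M[C]_(m, n)) : adjmx A^T = (adjmx A)^T.
Proof. by apply/matrixP => i j; rewrite !mxE. Qed.

Definition ip n (x y : 'cV[C]_n) : C := (adjmx x *m y) 0 0.

Lemma ipE n (x y : 'cV[C]_n) : ip x y = \sum_i (x i 0)^* * y i 0.
Proof. by rewrite /ip /adjmx !mxE; apply: eq_bigr => i _; rewrite !mxE. Qed.

Lemma ipZl n a (x y : 'cV[C]_n) : ip (a *: x) y = a^* * ip x y.
Proof. by rewrite /ip adjmxZ -scalemxAl mxE. Qed.

Lemma ipZr n a (x y : 'cV[C]_n) : ip x (a *: y) = a * ip x y.
Proof. by rewrite /ip -scalemxAr mxE. Qed.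

Lemma ipM n (M : 'M[C]_n) (x y : 'cV[C]_n) :
  adjmx M *m M = 1%:M -> ip (M *m x) (M *m y) = ip x y.
Proof. by move=> h; rewrite /ip adjmxM mulmxA -(mulmxA _ _ M) h mulmx1. Qed.

Lemma ip_ge0 n (x : 'cV[C]_n) : 0 <= ip x x.
Proof.
rewrite ipE; apply: sumr_ge0 => i _; rewrite mulrC -normCK.
exact: exprn_ge0.
Qed.

Lemma ip_eq0 n (x : 'cV[C]_n) : ip x x = 0 -> x = 0.
Proof.
rewrite ipE => /eqP; rewrite psumr_eq0 => [/allP h|i _]; last first.
  by rewrite mulrC -normCK exprn_ge0.
apply/matrixP => i j; rewrite (ord1 j) mxE.
have /implyP := h i (mem_index_enum _) => /(_ isT).
by rewrite mulrC -normCK expf_eq0 /= normr_eq0 => /eqP.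
Qed.

End A.
Section B.
Variable R : realType.
Local Notation C := R[i].

Definition ee (a : R) : C := cos a +i* sin a.

Lemma cexpI a : cexp (0 +i* a) = ee a.
Proof. by rewrite /cexp /= expR0 mul1r. Qed.

Lemma eeD a b : ee (a + b) = ee a * ee b.
Proof.
apply/eqP; rewrite eq_complex /= cosD sinD; apply/andP; split; apply/eqP; ring.
Qed.

Lemma ee0 : ee 0 = 1.
Proof. by rewrite /ee cos0 sin0. Qed.

Lemma eeMn a k : ee a ^+ k = ee (a *+ k).
Proof.
elim: k => [|k ih]; first by rewrite expr0 mulr0n ee0.
by rewrite exprS ih mulrS eeD.
Qed.

Lemma ee_conj a : (ee a)^* = ee (- a).
Proof. by rewrite /ee cosN sinN. Qed.

Lemma ee_conjM a : (ee a)^* * ee a = 1.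
Proof.
apply/eqP; rewrite eq_complex /=; have := cos2Dsin2 a.
rewrite !expr2 => h; apply/andP; split; apply/eqP; lra.
Qed.

Lemma ee_Mconj a : ee a * (ee a)^* = 1.
Proof. by rewrite mulrC ee_conjM. Qed.

Lemma ee2pi k : ee ((pi *+ 2) *+ k) = 1.
Proof. by rewrite -eeMn /ee cos2pi sin2pi expr1n. Qed.

Lemma ee_neq1 x : 0 < x < pi *+ 2 -> ee x != 1.
Proof.
move=> /andP[x0 x2]; rewrite eq_complex /= negb_and; apply/orP.
case: (ltrgtP x pi) => hx.
- by right; rewrite gt_eqF // sin_gt0_pi // x0 hx.
- right; have -> : x = (x - pi) + pi by rewrite subrK.
  rewrite sinDpi oppr_eq0 gt_eqF // sin_gt0_pi // subr_gt0 hx /=.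
  by rewrite ltrBlDr -mulr2n.
- left; rewrite hx cospi; apply/eqP => h.
  by have := (@ltr01 R); rewrite -h; lra.
Qed.

Variables (q r : nat).
Hypotheses (hr : (0 < r)%N) (hqr : coprime q r).

Definition om : C := cexp (0 +i* (2 * pi * theta_of R q r)).

Lemma om_conjM : om^* * om = 1.
Proof. by rewrite /om cexpI ee_conjM. Qed.

Lemma om_neq0 : om != 0.
Proof. by apply/negP => /eqP h; have := om_conjM; rewrite h mulr0 => /eqP; rewrite eq_sym oner_eq0. Qed.

Lemma om_expr d : om ^+ d = ee ((2 * pi * theta_of R q r) *+ d).
Proof. by rewrite /om cexpI eeMn. Qed.

Lemma om_r : om ^+ r = 1.
Proof.
rewrite om_expr; have -> : (2 * pi * theta_of R q r) *+ r = (pi *+ 2) *+ q.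
  rewrite /theta_of -[LHS]mulr_natr -[RHS]mulr_natr -[pi *+ 2]mulr_natr.
  rewrite -mulrA divfK; last by rewrite pnatr_eq0 -lt0n.
  by rewrite [2 * pi]mulrC.
exact: ee2pi.
Qed.

Lemma om_prim d : (0 < d < r)%N -> om ^+ d != 1.
Proof.
move=> /andP[d0 dr]; rewrite om_expr.
set k := (q * d %/ r)%N; set m := (q * d %% r)%N.
have hN : (q * d)%:R = k%:R * r%:R + m%:R :> R.
  by rewrite -natrM -natrD -divn_eq.
have rn0 : r%:R != 0 :> R by rewrite pnatr_eq0 -lt0n.
have -> : (2 * pi * theta_of R q r) *+ d = (pi *+ 2) *+ k + 2 * pi * (m%:R / r%:R).
  rewrite [LHS](_ : _ = 2 * pi * ((q * d)%:R / r%:R)); last first.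
    by rewrite /theta_of natrM -[LHS]mulr_natr; field.
  by rewrite hN -[_ *+ k]mulr_natr -[pi *+ 2]mulr_natr; field.
rewrite eeD ee2pi mul1r; apply: ee_neq1.
have m0 : (0 < m)%N.
  rewrite lt0n; apply/negP => /eqP hm.
  have : (r %| q * d)%N by rewrite /dvdn -/m hm.
  rewrite Gauss_dvdr; last by rewrite coprime_sym.
  by move/dvdn_leq => /(_ d0); rewrite leqNgt dr.
have mr : (m < r)%N by apply: ltn_pmod.
have pi0 := @pi_gt0 R.
have h1 : 0 < m%:R / r%:R :> R by rewrite divr_gt0 ?ltr0n.
have h2 : m%:R / r%:R < 1 :> R by rewrite ltr_pdivrMr ?ltr0n // mul1r ltr_nat.
rewrite -[pi *+ 2]mulr_natr; apply/andP; split; nra.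
Qed.

End B.
Section C.
Variable R : realType.
Local Notation C := R[i].

Lemma eigen_exists n (A : 'M[C]_n) : (0 < n)%N -> exists c, eigenvalue A c.
Proof.
move=> n0; have : size (char_poly A) != 1%N by rewrite size_char_poly; case: n n0 A.
by move/closed_rootP => [c hc]; exists c; rewrite eigenvalue_root_char.
Qed.

Lemma schur th n (U V : 'M[C]_n) : is_irrep th U V ->
  forall M : 'M[C]_n, M *m U = U *m M -> M *m V = V *m M -> exists c, M = c%:M.
Proof.
move=> [_ n0 irr] M hU hV.
have [c hc] := eigen_exists M^T n0.
exists c.
set B := M^T - c%:M.
have comm X : M *m X = X *m M -> X^T *m B = B *m X^T.
  move=> hX; rewrite /B mulmxBr mulmxBl scalar_mxC -!trmx_mul hX //.
have inv X : M *m X = X *m M -> (kermx B *m X^T <= kermx B)%MS.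
  move=> hX; rewrite sub_kermx -mulmxA comm // mulmxA mulmx_ker mul0mx //.
have [h0|hn] := irr (kermx B) (inv U hU) (inv V hV).
  by move: hc; rewrite /eigenvalue /eigenspace -mxrank_eq0 -/B h0 eqxx.
have : row_full (kermx B) by rewrite /row_full hn.
move/row_fullP => [B' hB'].
have B0 : B = 0 by rewrite -[B]mul1mx -hB' -mulmxA mulmx_ker mulmx0.
by rewrite -[M]trmxK; move/eqP: B0; rewrite subr_eq0 => /eqP ->; rewrite tr_scalar_mx.
Qed.

End C.
Section NF.
Variable R : realType.
Local Notation C := R[i].
Variables (q r : nat).
Hypotheses (hr : (0 < r)%N) (hqr : coprime q r).
Local Notation th := (theta_of R q r).
Local Notation om := (om R q r).
Definition etaw : C := om^-1.


Lemma eta_neq0 : etaw != 0.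
Proof. by rewrite /etaw invr_eq0 (om_neq0 R q r). Qed.

Lemma eta_r : etaw ^+ r = 1.
Proof. by rewrite /etaw exprVn (om_r R q hr) invr1. Qed.

Lemma eta_inj (j k : nat) : (j < r)%N -> (k < r)%N -> etaw ^+ j = etaw ^+ k -> j = k.
Proof.
wlog jk : j k / (j <= k)%N.
  move=> h jr kr e; case: (leqP j k) => hjk; first exact: h.
  by apply/esym/h => //; apply: ltnW.
move=> jr kr e; move: jk; rewrite leq_eqVlt => /orP[/eqP //|jk].
have : etaw ^+ (k - j) = 1.
  apply: (mulfI (expf_neq0 j eta_neq0)); rewrite -exprD subnKC; last exact: ltnW.
  by rewrite mulr1 e.
rewrite /etaw exprVn => /eqP; rewrite invr_eq1 => h.
have := @om_prim R q r hr hqr (k - j)%N; rewrite h subn_gt0 jk /=.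
by move=> /(_ (leq_ltn_trans (leq_subr _ _) kr)).
Qed.

Lemma unit_normE (a : C) : a^* * a = 1 -> `|a| = 1.
Proof.
move=> h; apply/eqP; rewrite -(@pexpr_eq1 _ _ 2) // normCKC h //.
Qed.

Lemma unit_normE' (a : C) : `|a| = 1 -> a^* * a = 1.
Proof. by move=> h; rewrite -normCKC h expr1n. Qed.

Lemma unitary_expr n (V : 'M[C]_n) k : Defs.unitarymx V -> adjmx (V ^+ k) *m V ^+ k = 1%:M.
Proof.
move=> [h1 h2]; elim: k => [|k ih]; first by rewrite expr0 adjmx1 mulmx1.
by rewrite exprSr -mulmxE adjmxM !mulmxA -(mulmxA _ _ (V ^+ k)) ih mulmx1 h1.
Qed.

Lemma om_norm : `|om| = 1.
Proof. exact/unit_normE/(om_conjM R q r). Qed.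

Lemma eta_norm : `|etaw| = 1.
Proof. by rewrite /etaw normrV ?unitfE ?(om_neq0 R q r) // om_norm invr1. Qed.

Lemma eta_conjM : etaw^* * etaw = 1.
Proof. exact/unit_normE'/eta_norm. Qed.



Definition Dm : 'M[C]_r := diag_mx (\row_(k < r) etaw ^+ k).
Definition Pm : 'M[C]_r := \matrix_(j < r, k < r) ((j : nat) == (k.+1 %% r)%N)%:R.

Section NFmain.
Variables (n : nat) (U V : 'M[C]_n).
Hypothesis Hirr : is_irrep th U V.

Lemma uU : Defs.unitarymx U. Proof. by case: Hirr => [[]]. Qed.
Lemma uV : Defs.unitarymx V. Proof. by case: Hirr => [[]]. Qed.
Lemma hVU : V *m U = om *: (U *m V). Proof. by case: Hirr => [[]]. Qed.

Lemma UV1 : U *m V = etaw *: (V *m U).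
Proof. by rewrite hVU scalerA /etaw mulVf ?(om_neq0 R q r) // scale1r. Qed.

Lemma UVk k : U *m V ^+ k = etaw ^+ k *: (V ^+ k *m U).
Proof.
elim: k => [|k ih]; first by rewrite !expr0 scale1r mulmx1 mul1mx.
rewrite exprSr -mulmxE mulmxA ih -scalemxAl -mulmxA UV1 -scalemxAr scalerA.
by rewrite -exprSr mulmxA.
Qed.


Lemma Vr_scalar : exists c, V ^+ r = c%:M.
Proof.
apply: (schur Hirr).
  by rewrite (UVk r) eta_r scale1r.
by rewrite mulmxE -exprSr exprS.
Qed.

Lemma n_gt0 : (0 < n)%N. Proof. by case: Hirr. Qed.

Lemma eigvec : exists (x : 'cV[C]_n) (lam : C), [/\ ip x x = 1, U *m x = lam *: x & `|lam| = 1].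
Proof.
have [lam hl] := eigen_exists U^T n_gt0.
case/eigenvalueP: hl => v hv vn0.
set x0 := v^T.
have hx0 : U *m x0 = lam *: x0.
  by rewrite /x0 -[U]trmxK -trmx_mul hv linearZ.
have x0n0 : x0 != 0 by rewrite trmx_eq0.
set p := ip x0 x0.
have p0 : p != 0 by apply/negP => /eqP /ip_eq0 h; move: x0n0; rewrite h eqxx.
have pge0 : 0 <= p := ip_ge0 x0.
set s0 := (sqrtC p)^-1.
have s0ge : 0 <= s0 by rewrite invr_ge0 sqrtC_ge0.
exists (s0 *: x0), lam; split.
- rewrite ipZl ipZr geC0_conj // -/p mulrA -expr2 exprVn sqrtCK mulVf //.
- by rewrite -scalemxAr hx0 !scalerA mulrC.
- have hx : ip x0 x0 = ip (U *m x0) (U *m x0) by rewrite ipM //; case: uU.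
  move: hx; rewrite hx0 ipZl ipZr -/p mulrA -{1}[p]mul1r => /mulIf => /(_ p0) h.
  by apply: unit_normE; rewrite h.
Qed.


Section Build.
Variables (x : 'cV[C]_n) (lam c mu : C).
Hypotheses (hx : ip x x = 1) (hUx : U *m x = lam *: x) (hc : V ^+ r = c%:M)
  (hmu : mu ^+ r = c) (hmun : `|mu| = 1) (hlam : `|lam| = 1).

Lemma mu_neq0 : mu != 0.
Proof. by rewrite -normr_eq0 hmun oner_eq0. Qed.

Definition nu : C := mu^-1.
Definition uu (k : nat) : 'cV[C]_n := nu ^+ k *: (V ^+ k *m x).
Definition Ym : 'M[C]_(n, r) := \matrix_(i, k) uu k i 0.

Lemma U_uu k : U *m uu k = (lam * etaw ^+ k) *: uu k.
Proof.
rewrite /uu -scalemxAr mulmxA UVk -scalemxAl -mulmxA hUx -scalemxAr.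
by rewrite !scalerA; congr (_ *: _); ring.
Qed.

Lemma nu_norm : `|nu| = 1.
Proof. by rewrite /nu normrV ?unitfE ?mu_neq0 // hmun invr1. Qed.

Lemma ip_uu (j k : 'I_r) : ip (uu j) (uu k) = (j == k)%:R.
Proof.
case: (eqVneq j k) => [<-|jk].
  rewrite /uu ipZl ipZr ipM; last exact: unitary_expr uV.
  rewrite hx mulr1 /= unit_normE' //.
  by rewrite normrX nu_norm expr1n.
set g := ip (uu j) (uu k).
have e : g = (lam * etaw ^+ j)^* * (lam * etaw ^+ k) * g.
  by rewrite /g -mulrA -ipZr -ipZl -!U_uu ipM //; case: uU.
have : (1 - (lam * etaw ^+ j)^* * (lam * etaw ^+ k)) * g = 0.
  by rewrite mulrBl mul1r -e subrr.
move/eqP; rewrite mulf_eq0 => /orP[|/eqP //].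
rewrite subr_eq0 => /eqP h1.
set a := lam * etaw ^+ j; set b := lam * etaw ^+ k.
have ha : a^* * a = 1 by apply: unit_normE'; rewrite normrM normrX eta_norm expr1n mulr1.
have : b = a by rewrite -[b]mul1r -ha mulrC mulrA [b * _]mulrC -h1 mul1r.
move/(mulfI (_ : lam != 0)).
have ln0 : lam != 0 by rewrite -normr_eq0 hlam oner_eq0.
move=> /(_ ln0) /eta_inj => /(_ (ltn_ord k) (ltn_ord j)) /val_inj hkj.
by move: jk; rewrite hkj eqxx.
Qed.


Lemma V_uu (k : 'I_r) : V *m uu k = mu *: uu (k.+1 %% r).
Proof.
have munu : mu * nu = 1 by rewrite /nu mulfV // mu_neq0.
rewrite /uu -scalemxAr mulmxA.
have -> : V *m V ^+ k = V ^+ k.+1 by rewrite exprS mulmxE.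
have [kr|] := ltnP k.+1 r.
  rewrite modn_small // scalerA; congr (_ *: _).
  by rewrite exprS mulrA munu mul1r.
move=> rk; have ekr : k.+1 = r by apply/eqP; rewrite eqn_leq rk ltn_ord.
rewrite ekr modnn expr0 scale1r mul1mx hc mul_scalar_mx scalerA.
have -> : c = mu ^+ k.+1 by rewrite -hmu ekr.
by congr (_ *: _); rewrite exprS mulrCA -exprMn [nu * mu]mulrC munu expr1n mulr1.
Qed.

Lemma mulmx_Y m (A : 'M[C]_(m, n)) i k : (A *m Ym) i k = (A *m uu k) i 0.
Proof. by rewrite !mxE; apply: eq_bigr => j _; rewrite mxE. Qed.

Lemma Y_adj : adjmx Ym *m Ym = 1%:M.
Proof.
apply/matrixP => j k; rewrite mxE [RHS]mxE -ip_uu ipE.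
by apply: eq_bigr => i _; rewrite !mxE.
Qed.

Lemma U_Y : U *m Ym = lam *: (Ym *m Dm).
Proof.
apply/matrixP => i k; rewrite mulmx_Y U_uu /Dm mul_mx_diag !mxE.
by ring.
Qed.

Lemma V_Y : V *m Ym = mu *: (Ym *m Pm).
Proof.
apply/matrixP => i k; rewrite mulmx_Y V_uu [in LHS]mxE [in RHS]mxE.
congr (_ * _); rewrite [RHS]mxE.
rewrite (bigD1 (Ordinal (ltn_pmod k.+1 hr))) //= big1 ?addr0.
  by rewrite [Ym _ _]mxE [Pm _ _]mxE /= eqxx mulr1n mulr1.
move=> j hj; rewrite [Pm _ _]mxE; case: eqP => [e|]; last by rewrite mulr0.
have ej : j = Ordinal (ltn_pmod k.+1 hr) by apply: val_inj.
by rewrite ej eqxx in hj.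
Qed.


Lemma Y_adj' : Ym *m adjmx Ym = 1%:M.
Proof.
case: Hirr => _ _ irr.
set X := Ym^T.
have iU : (<<X>> *m U^T <= <<X>>)%MS.
  rewrite (eqmxMr _ (genmxE X)) genmxE /X -trmx_mul U_Y linearZ /= trmx_mul.
  by apply: scalemx_sub; apply: submxMl.
have iV : (<<X>> *m V^T <= <<X>>)%MS.
  rewrite (eqmxMr _ (genmxE X)) genmxE /X -trmx_mul V_Y linearZ /= trmx_mul.
  by apply: scalemx_sub; apply: submxMl.
have [h0|hn] := irr _ iU iV.
  move/eqP: h0; rewrite genmxE mxrank_eq0 /X trmx_eq0 => /eqP Y0.
  have := Y_adj; rewrite Y0 mulmx0 => /matrixP /(_ (Ordinal hr) (Ordinal hr)).
  by rewrite !mxE eqxx /= => /eqP; rewrite eq_sym oner_eq0.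
have : row_full X by rewrite /row_full -(genmxE X) hn.
move/row_fullP => [B hB].
have hYB : Ym *m B^T = 1%:M by rewrite -[Ym]trmxK -trmx_mul hB trmx1.
by rewrite -[LHS]mulmx1 -hYB !mulmxA -(mulmxA Ym) Y_adj mulmx1.
Qed.

End Build.

Lemma normal_form : exists (Y : 'M[C]_(n, r)) (lam mu : C),
  (adjmx Y *m Y = 1%:M /\ Y *m adjmx Y = 1%:M) /\ [/\ `|lam| = 1, `|mu| = 1,
      U *m Y = lam *: (Y *m Dm) & V *m Y = mu *: (Y *m Pm)].
Proof.
have [x [lam [hx hUx hlam]]] := eigvec.
have [c hc] := Vr_scalar.
set mu := r.-root c.
have hmu : mu ^+ r = c by rewrite /mu rootCK.
have hcn : `|c| = 1.
  apply: unit_normE.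
  have := ipM x x (unitary_expr r uV); rewrite hc !mul_scalar_mx ipZl ipZr hx mulr1 //.
have hmun : `|mu| = 1.
  apply/eqP; rewrite -(@pexpr_eq1 _ _ r hr) // -normrX hmu hcn //.
exists (Ym x mu), lam, mu; split; first split.
- by apply: Y_adj; eassumption.
- by apply: Y_adj'; eassumption.
split => //.
- by apply: U_Y; eassumption.
- by apply: V_Y; eassumption.
Qed.

End NFmain.

Lemma conjY m n (Y : 'M[C]_(n, r)) (Y' : 'M[C]_(m, r)) (M : 'M[C]_r) :
  adjmx Y *m Y = 1%:M ->
  (Y' *m adjmx Y) *m (Y *m M *m adjmx Y) *m adjmx (Y' *m adjmx Y) = Y' *m M *m adjmx Y'.
Proof.
move=> h; rewrite adjmxM adjmxK !mulmxA -(mulmxA Y' (adjmx Y) Y) h mulmx1.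
by rewrite -(mulmxA (Y' *m M) (adjmx Y) Y) h mulmx1.
Qed.

Lemma conj_form n (U : 'M[C]_n) (Y : 'M[C]_(n, r)) lam M :
  U *m Y = lam *: (Y *m M) -> Y *m adjmx Y = 1%:M -> U = lam *: (Y *m M *m adjmx Y).
Proof. by move=> h1 h2; rewrite -[U]mulmx1 -h2 mulmxA h1 -scalemxAl. Qed.

Lemma irrep_equiv n m (U V : 'M[C]_n) (U' V' : 'M[C]_m) :
  is_irrep th U V -> is_irrep th U' V' ->
  exists s t : C, [/\ `|s| = 1, `|t| = 1 & unit_equiv U' V' (s *: U) (t *: V)].
Proof.
move=> h h'.
have [Y [lam [mu [[YY YY'] [hl hm hU hV]]]]] := normal_form h.
have [Y' [lam' [mu' [[ZZ ZZ'] [hl' hm' hU' hV']]]]] := normal_form h'.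
have ln0 : lam != 0 by rewrite -normr_eq0 hl oner_eq0.
have mn0 : mu != 0 by rewrite -normr_eq0 hm oner_eq0.
exists (lam' / lam), (mu' / mu); split.
- by rewrite normrM normrV ?unitfE // hl hl' invr1 mulr1.
- by rewrite normrM normrV ?unitfE // hm hm' invr1 mulr1.
exists (Y' *m adjmx Y); split.
- by rewrite adjmxM adjmxK !mulmxA -(mulmxA Y) ZZ mulmx1 YY'.
- by rewrite adjmxM adjmxK !mulmxA -(mulmxA Y') YY mulmx1 ZZ'.
- rewrite (conj_form hU YY') scalerA -scalemxAr -scalemxAl conjY //.
  by rewrite divfK // (conj_form hU' ZZ').
- rewrite (conj_form hV YY') scalerA -scalemxAr -scalemxAl conjY //.
  by rewrite divfK // (conj_form hV' ZZ').
Qed.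

End NF.
Section Bundle.
Variable R : realType.
Local Notation C := R[i].

Lemma unitary_unit n (X : 'M[C]_n) : Defs.unitarymx X -> X \in unitmx.
Proof. by case=> h _; case: (mulmx1_unit h). Qed.

Section Conj.
Variables (n m : nat) (W : 'M[C]_(m, n)).
Hypotheses (hW1 : adjmx W *m W = 1%:M) (hW2 : W *m adjmx W = 1%:M).

Lemma conj_powN (X : 'M[C]_n) j : (W *m X *m adjmx W) ^+ j = W *m X ^+ j *m adjmx W.
Proof.
elim: j => [|j ih]; first by rewrite !expr0 mulmx1 hW2.
rewrite exprS ih; change ((W *m X *m adjmx W) *m (W *m X ^+ j *m adjmx W) = W *m X ^+ j.+1 *m adjmx W).
rewrite !mulmxA -(mulmxA _ (adjmx W) W) hW1 mulmx1.
have -> : X ^+ j.+1 = X *m X ^+ j by rewrite exprS mulmxE.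
by rewrite !mulmxA.
Qed.

Lemma conj_inv (X : 'M[C]_n) : X \in unitmx ->
  invmx (W *m X *m adjmx W) = W *m invmx X *m adjmx W.
Proof.
move=> hX.
have hAB : (W *m invmx X *m adjmx W) *m (W *m X *m adjmx W) = 1%:M.
  by rewrite !mulmxA -(mulmxA _ (adjmx W) W) hW1 mulmx1 -(mulmxA W) mulVmx // mulmx1 hW2.
have [_ hB] := mulmx1_unit hAB.
by rewrite -[LHS]mul1mx -hAB -(mulmxA (W *m invmx X *m adjmx W)) mulmxV // mulmx1.
Qed.

Lemma mxpowz_conj (X : 'M[C]_n) k : X \in unitmx ->
  mxpowz (W *m X *m adjmx W) k = W *m mxpowz X k *m adjmx W.
Proof.
move=> hX; case: k => j /=; first exact: conj_powN.
by rewrite conj_inv // conj_powN.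
Qed.

End Conj.

Lemma exprZmx n (s : C) (X : 'M[C]_n) j : (s *: X) ^+ j = s ^+ j *: X ^+ j.
Proof.
elim: j => [|j ih]; first by rewrite !expr0 scale1r.
rewrite !exprS ih; change ((s *: X) *m (s ^+ j *: X ^+ j) = (s * s ^+ j) *: (X *m X ^+ j)).
by rewrite -scalemxAl -scalemxAr scalerA.
Qed.

Lemma mxpowz_scale n (s : C) (X : 'M[C]_n) k : s != 0 -> X \in unitmx ->
  mxpowz (s *: X) k = (s ^ k) *: mxpowz X k.
Proof.
move=> s0 hX; case: k => j /=; first exact: exprZmx.
rewrite invmxZ; last by rewrite unitmxZ ?unitfE.
by rewrite exprZmx exprVn.
Qed.


Lemma Jfac_rel th tau n m (U V : 'M[C]_n) (U' V' : 'M[C]_m) (W : 'M[C]_(m, n)) s t a b z :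
  adjmx W *m W = 1%:M -> W *m adjmx W = 1%:M -> s != 0 -> t != 0 ->
  U \in unitmx -> V \in unitmx ->
  U' = W *m (s *: U) *m adjmx W -> V' = W *m (t *: V) *m adjmx W ->
  Jfac th tau U' V' a b z = (s ^ (- a) * t ^ (- b)) *: (W *m Jfac th tau U V a b z *m adjmx W).
Proof.
move=> h1 h2 s0 t0 hU hV -> ->.
rewrite /Jfac !mxpowz_conj // ?unitmxZ ?unitfE // !mxpowz_scale //.
rewrite !mulmxA -(mulmxA _ (adjmx W) W) h1 mulmx1.
rewrite -?scalemxAr -?scalemxAl -?scalemxAr -?scalemxAl -?scalemxAr -?scalemxAl !scalerA.
congr (_ *: _).
  move: (cexp _ * _) (s ^ (- a)) (t ^ (- b)) => k1 k2 k3.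
  by ring.
by rewrite !mulmxA.
Qed.


Lemma polar (s : C) : `|s| = 1 -> exists sg : R, s = ee sg.
Proof.
case: s => a b h.
have hab : a ^+ 2 + b ^+ 2 = 1.
  move: (add_Re2_Im2 (a +i* b)); rewrite h expr1n /= => e.
  by apply: (@complexI R); rewrite e.
have ha : -1 <= a <= 1.
  have := sqr_ge0 b; rewrite !expr2 in hab * => hb.
  apply/andP; split; nra.
have sa : sin (acos a) = `|b|.
  by rewrite sin_acos // -hab [a ^+ 2 + _]addrC addrK sqrtr_sqr.
have ca : cos (acos a) = a by rewrite acosK // in_itv.
case: (leP 0 b) => hb.
  by exists (acos a); rewrite /ee ca sa ger0_norm.
by exists (- acos a); rewrite /ee cosN sinN ca sa ltr0_norm // opprK.
Qed.

Lemma ee_inv (x : R) : (ee x)^-1 = ee (- x).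
Proof.
have h : ee x * ee (- x) = 1 by rewrite -eeD subrr ee0.
have hn : ee x != 0 by apply/negP => /eqP e; move: h; rewrite e mul0r => /eqP; rewrite eq_sym oner_eq0.
by rewrite -[ee (- x)]mul1r -(mulVf hn) -mulrA h mulr1.
Qed.

Lemma ee_int (sg : R) (k : int) : ee sg ^ k = ee (sg * k%:~R).
Proof.
case: k => j; rewrite /exprz.
  by rewrite eeMn; change (ee (sg *+ j) = ee (sg * j%:R)); rewrite mulr_natr.
rewrite eeMn ee_inv NegzE intrN mulrN.
by change (ee (- (sg *+ j.+1)) = ee (- (sg * j.+1%:R))); rewrite mulr_natr.
Qed.

Lemma real_int (a : int) : (a%:~R : C) = (a%:~R : R)%:C.
Proof. by rewrite (rmorph_int (real_complex R)). Qed.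

Lemma Re_shift (z tau : C) (a b : int) :
  complex.Re (z + (a%:~R + tau * b%:~R)) = complex.Re z + a%:~R + complex.Re tau * b%:~R.
Proof. by rewrite !real_int; case: z tau => [x y] [u v] /=; ring. Qed.

Lemma Im_shift (z tau : C) (a b : int) :
  complex.Im (z + (a%:~R + tau * b%:~R)) = complex.Im z + complex.Im tau * b%:~R.
Proof. by rewrite !real_int; case: z tau => [x y] [u v] /=; ring. Qed.

Lemma lin_cont (al be : R) : continuous (fun p : (R * R)%type => al * p.1 + be * p.2).
Proof.
move=> p.
apply: (@continuousD _ _ _ (fun p : (R * R)%type => al * p.1) (fun p : (R*R)%type => be * p.2)).
  apply: (@continuousM _ _ (fun _ => al) (fun p : (R*R)%type => p.1)); first exact: cst_continuous.
  exact: cvg_fst.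
apply: (@continuousM _ _ (fun _ => be) (fun p : (R*R)%type => p.2)); first exact: cst_continuous.
exact: cvg_snd.
Qed.

Lemma cos_lin_cont (al be w : R) :
  continuous (fun p : (R * R)%type => cos (al * p.1 + be * p.2) * w).
Proof.
move=> p; apply: (@continuousM _ _ (fun p : (R*R)%type => cos (al * p.1 + be * p.2)) (fun _ => w)); last exact: cst_continuous.
apply: (@continuous_comp _ _ _ (fun p : (R*R)%type => al * p.1 + be * p.2) cos); first exact: lin_cont.
exact: continuous_cos.
Qed.

Lemma sin_lin_cont (al be w : R) :
  continuous (fun p : (R * R)%type => sin (al * p.1 + be * p.2) * w).
Proof.
move=> p; apply: (@continuousM _ _ (fun p : (R*R)%type => sin (al * p.1 + be * p.2)) (fun _ => w)); last exact: cst_continuous.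
apply: (@continuous_comp _ _ _ (fun p : (R*R)%type => al * p.1 + be * p.2) sin); first exact: lin_cont.
exact: continuous_sin.
Qed.

Lemma cont_ee (al be : R) m n (M : 'M[C]_(m, n)) :
  cont_mxfun (fun z => ee (al * complex.Re z + be * complex.Im z) *: M).
Proof.
move=> i j; case E: (M i j) => [wr wi]; split.
  have -> : (fun p : (R * R)%type => complex.Re ((ee (al * complex.Re (p.1 +i* p.2) + be * complex.Im (p.1 +i* p.2)) *: M) i j))
     = (fun p => cos (al * p.1 + be * p.2) * wr - sin (al * p.1 + be * p.2) * wi).
    by apply: funext => p; rewrite mxE E.
  move=> p; apply: (@continuousB _ _ _ (fun p : (R * R)%type => cos (al * p.1 + be * p.2) * wr) (fun p : (R * R)%type => sin (al * p.1 + be * p.2) * wi)).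
    exact: cos_lin_cont.
  exact: sin_lin_cont.
have -> : (fun p : (R * R)%type => complex.Im ((ee (al * complex.Re (p.1 +i* p.2) + be * complex.Im (p.1 +i* p.2)) *: M) i j))
   = (fun p => cos (al * p.1 + be * p.2) * wi + sin (al * p.1 + be * p.2) * wr).
  by apply: funext => p; rewrite mxE E.
move=> p; apply: (@continuousD _ _ _ (fun p : (R * R)%type => cos (al * p.1 + be * p.2) * wi) (fun p : (R * R)%type => sin (al * p.1 + be * p.2) * wr)).
  exact: cos_lin_cont.
exact: sin_lin_cont.
Qed.

End Bundle.
Lemma part2 (R : realType) q r (hr : (0 < r)%N) (hqr : coprime q r) (tau : R[i])
  (htau : 0 < complex.Im tau) m1 (U1 V1 : 'M[R[i]]_m1) m2 (U2 V2 : 'M[R[i]]_m2) :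
  is_irrep (theta_of R q r) U1 V1 -> is_irrep (theta_of R q r) U2 V2 ->
  bundle_iso (theta_of R q r) tau U1 V1 U2 V2.
Proof.
move=> h1 h2.
have [s [t [hs ht [W [w1 w2 hU hV]]]]] := irrep_equiv hr hqr h1 h2.
have [sg1 es] := polar hs; have [sg2 et] := polar ht.
have s0 : s != 0 by rewrite -normr_eq0 hs oner_eq0.
have t0 : t != 0 by rewrite -normr_eq0 ht oner_eq0.
have [[uU1 uV1 _] _ _] := h1.
have iU1 := unitary_unit uU1; have iV1 := unitary_unit uV1.
have ti0 : complex.Im tau != 0 by rewrite gt_eqF.
set al := - sg1; set be := (sg1 * complex.Re tau - sg2) / complex.Im tau.
exists (fun z => ee (al * complex.Re z + be * complex.Im z) *: W),
  (fun z => ee ((- al) * complex.Re z + (- be) * complex.Im z) *: adjmx W).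
split.
- exact: cont_ee.
- exact: cont_ee.
- move=> z; rewrite -scalemxAl -scalemxAr scalerA -eeD (_ : adjmx W *m W = 1%:M); last exact: w1.
  have -> : - al * complex.Re z + - be * complex.Im z + (al * complex.Re z + be * complex.Im z) = 0 by ring.
  by rewrite ee0 scale1r.
- move=> z; rewrite -scalemxAl -scalemxAr scalerA -eeD (_ : W *m adjmx W = 1%:M); last exact: w2.
  have -> : al * complex.Re z + be * complex.Im z + (- al * complex.Re z + - be * complex.Im z) = 0 by ring.
  by rewrite ee0 scale1r.
move=> a b z; rewrite (Jfac_rel _ _ _ _ _ w1 w2 s0 t0 iU1 iV1 hU hV).
move: (Jfac _ _ U1 V1 a b z) => J.
rewrite -!scalemxAl -scalemxAr scalerA -(mulmxA (W *m J)) (_ : adjmx W *m W = 1%:M); last exact: w1.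
rewrite mulmx1.
congr (_ *: _).
rewrite es et !ee_int -!eeD Re_shift Im_shift; congr ee.
rewrite /al /be !intrN; field; exact: ti0.
Qed.

Unset Implicit Arguments.

Theorem corollary3p1 (R : realType) (tau : R[i]) (q r : nat) (n : nat)
    (U V : 'M[R[i]]_n) :
  0 < complex.Im tau -> (0 < q)%N -> (0 < r)%N -> coprime q r ->
  is_irrep (theta_of R q r) U V ->
  (forall m (U' V' : 'M[R[i]]_m), is_irrep (theta_of R q r) U' V' ->
     exists s t : R[i], [/\ `|s| = 1, `|t| = 1 &
       unit_equiv U' V' (s *: U) (t *: V)]) /\
  (forall m1 (U1 V1 : 'M[R[i]]_m1) m2 (U2 V2 : 'M[R[i]]_m2),
     is_irrep (theta_of R q r) U1 V1 -> is_irrep (theta_of R q r) U2 V2 ->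
     bundle_iso (theta_of R q r) tau U1 V1 U2 V2).
Proof.
move=> htau _ hr hqr hU; split.
- move=> m U' V' h'; exact (irrep_equiv hr hqr hU h').
- move=> m1 U1 V1 m2 U2 V2 h1 h2; exact (part2 hr hqr htau h1 h2).
Qed.
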